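(* Let $d$ be a separated metric on a compact Hausdorff space $X$. Then the topology symmetrically induced by $d$ coincides with the topology of $X$ if and only if $d\colon X\times X\to[0,\infty]$ is continuous with respect to the lower topology on $[0,\infty]$. Moreover, if $(X,d)$ is a separated metric compact Hausdorff space and $d$ does not attain the value $\infty$, this condition is equivalent to continuity of $d\colon X\times X\to[0,\infty[$ with respect to the Euclidean topology on $[0,\infty[$.
   Context: A metric on a set $X$ is a map $d\colon X\times X\to[0,\infty]$ with $d(x,x)=0$ and $d(x,z)\le d(x,y)+d(y,z)$ (not necessarily symmetric, $\infty$ allowed); separated means $d(x,y)=0=d(y,x)$ implies $x=y$. The topology symmetrically induced by $d$ is the topology generated by the sets $\{x\mid d(x_0,x)<u\}$ and $\{x\mid d(x,x_0)<u\}$ for $x_0\in X$, $u\in[0,\infty]$. The lower topology on $[0,\infty]$ is generated by the sets $[0,u[$, and the upper topology by the sets $]u,\infty]$ ($u\in[0,\infty]$). A separated metric compact Hausdorff space is a compact Hausdorff space $X$ with a separated metric $d$ continuous as a map $X\times X\to[0,\infty]$ for the upper topology. *)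

(* Defs.v *)
(* [0,oo] is modelled as the nonnegative part of \bar R. *)
From HB Require Import structures.
From mathcomp Require Import all_boot all_order all_algebra.
From mathcomp Require Import all_classical all_reals all_analysis.
Set Implicit Arguments. Unset Strict Implicit. Unset Printing Implicit Defensive.
Import Order.TTheory GRing.Theory Num.Theory.
Local Open Scope classical_set_scope.
Local Open Scope ring_scope.
Local Open Scope ereal_scope.

Section Defs.
Context {R : realType} {X : topologicalType}.
Implicit Types d : X -> X -> \bar R.

(* d is a metric with values in [0,oo] (not necessarily symmetric) *)
Definition is_metric d : Prop :=
  (forall x y, 0 <= d x y) /\ (forall x, d x x = 0) /\
  (forall x y z, d x z <= d x y + d y z).

Definition separated_metric d : Prop :=
  forall x y, d x y = 0 -> d y x = 0 -> x = y.

Definition sym_subbasic d (A : set X) : Prop :=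
  exists x0 (u : \bar R), 0 <= u /\
    (A = [set x | d x0 x < u] \/ A = [set x | d x x0 < u]).

(* open sets of the topology generated by that subbasis:
   unions of finite intersections of subbasic sets *)
Definition sym_open d (A : set X) : Prop :=
  forall x, A x -> exists (n : nat) (B : 'I_n -> set X),
    (forall i, sym_subbasic d (B i)) /\ (forall i, B i x) /\
    (forall y, (forall i, B i y) -> A y).

Definition sym_topology_coincides d : Prop :=
  forall A : set X, sym_open d A <-> open A.

(* continuity of d : X * X -> [0,oo] for the lower topology, generated by
   the sets [0,u[ : preimages of all [0,u[ are open *)
Definition lower_continuous d : Prop :=
  forall u : \bar R, 0 <= u -> open [set p : X * X | d p.1 p.2 < u].

(* continuity for the upper topology, generated by the sets ]u,oo] *)
Definition upper_continuous d : Prop :=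
  forall u : \bar R, 0 <= u -> open [set p : X * X | u < d p.1 p.2].

End Defs.

(* Main.v *)
Require Import Defs.
From HB Require Import structures.
From mathcomp Require Import all_boot all_order all_algebra.
From mathcomp Require Import all_classical all_reals all_analysis.
From mathcomp Require Import ring lra.
Import Order.TTheory GRing.Theory Num.Theory.
Local Open Scope classical_set_scope.
Local Open Scope ring_scope.
Local Open Scope ereal_scope.

Section Helpers.
Context {R : realType} {X : topologicalType} (d : X -> X -> \bar R).

Lemma slice_l (W : set (X * X)) a b : open W -> W (a, b) -> nbhs a (fun z => W (z, b)).
Proof.
rewrite openE => oW Wab; have [[P Q] [/= Pa Qb] sub] := oW _ Wab.
apply: filterS Pa => z Pz; apply: (sub (z, b)); split => //=.
exact: nbhs_singleton.
Qed.

Lemma slice_r (W : set (X * X)) a b : open W -> W (a, b) -> nbhs b (fun z => W (a, z)).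
Proof.
rewrite openE => oW Wab; have [[P Q] [/= Pa Qb] sub] := oW _ Wab.
apply: filterS Qb => z Qz; apply: (sub (a, z)); split => //=.
exact: nbhs_singleton.
Qed.

Lemma ereal_gap (a u : \bar R) : 0 <= a -> a < u ->
  exists e : R, (0 < e)%R /\ a + e%:E + e%:E < u.
Proof.
case: a => [r| |] //= r0; case: u => [s| |] //=.
- rewrite lte_fin => rs; exists ((s - r) / 3)%R; split.
    by apply: divr_gt0; [rewrite subr_gt0|].
  rewrite -!EFinD lte_fin; lra.
- by move=> _; exists 1%R; split => //; rewrite -!EFinD ltry.
Qed.


Lemma sub_nbhs (A : set X) : lower_continuous d -> sym_subbasic d A ->
  forall z, A z -> nbhs z A.
Proof.
move=> lc [x0 [u [u0 [->|->]]]] z /= h.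
- have := slice_r _ _ _ (lc u u0) h; exact.
- have := slice_l _ _ _ (lc u u0) h; exact.
Qed.

Lemma symopen_open (A : set X) : lower_continuous d -> sym_open d A -> open A.
Proof.
move=> lc hA; rewrite openE => x Ax.
have [n [B [sB [Bx sub]]]] := hA x Ax.
apply: (filterS sub); apply: filter_forall => i.
exact: sub_nbhs (sB i) _ (Bx i).
Qed.

Lemma coincide_lower : sym_topology_coincides d -> is_metric d -> lower_continuous d.
Proof.
move=> co [d0 [dxx dtri]] u u0; rewrite openE => -[a b] /= hab.
have so : forall S, sym_subbasic d S -> open S.
  move=> S sS; apply/co => z Sz; exists 1%N, (fun _ => S).
  by split => //; split => // y; apply; exact: ord0.
have [e [e0 he]] := ereal_gap _ _ (d0 a b) hab.
have abfin : d a b \is a fin_num.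
  by rewrite ge0_fin_numE // (lt_le_trans hab) // leey.
pose P := [set z | d z a < e%:E]; pose Q := [set z | d b z < e%:E].
have nP : nbhs a P.
  apply: open_nbhs_nbhs; split; last by rewrite /P /= dxx lte_fin.
  by apply: so; exists a, e%:E; split; [rewrite lee_fin ltW | right].
have nQ : nbhs b Q.
  apply: open_nbhs_nbhs; split; last by rewrite /Q /= dxx lte_fin.
  by apply: so; exists b, e%:E; split; [rewrite lee_fin ltW | left].
exists (P, Q) => // -[z w] /= [Pz Qw].
have h1 : d z w <= d z a + (d a b + d b w).
  exact: le_trans (dtri z a w) (leeD2l _ (dtri a b w)).
apply: le_lt_trans h1 _; apply: lt_trans he.
have -> : d a b + e%:E + e%:E = e%:E + (d a b + e%:E).
  by rewrite addeCA addeA.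
apply: lteD => //.
by rewrite lteD2lE.
Qed.


Definition sb (x : X) (G : set X) := exists n (B : 'I_n -> set X),
  (forall i, sym_subbasic d (B i)) /\ (forall i, B i x) /\
  G = [set y | forall i, B i y].

Lemma sb_filter x : Filter (filter_from (sb x) id).
Proof.
apply: filter_from_filter.
  exists setT; exists 0%N, (fun _ => setT); split; first by case.
  split; first by case.
  by rewrite predeqE => y; split => // _ [].
move=> G1 G2 [n [B1 [s1 [x1 ->]]]] [m [B2 [s2 [x2 ->]]]].
pose B (k : 'I_(n + m)) := match fintype.split k with inl i => B1 i | inr j => B2 j end.
exists [set y | forall k, B k y].
  exists (n + m)%N, B; split; first by move=> k; rewrite /B; case: fintype.split.
  by split => //; move=> k; rewrite /B; case: fintype.split.
move=> y /= By; split => i.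
  have e : fintype.split (lshift m i) = inl i := unsplitK (inl i).
  by have := By (lshift m i); rewrite /B e.
have e : fintype.split (rshift n i) = inr i := unsplitK (inr i).
by have := By (rshift n i); rewrite /B e.
Qed.

Lemma open_symopen (A : set X) : compact [set: X] -> is_metric d ->
  separated_metric d -> lower_continuous d -> open A -> sym_open d A.
Proof.
move=> cX [d0 [dxx dtri]] sep lc oA x Ax.
have FF := sb_filter x.
have cC : compact (~` A) := subclosed_compact (open_closedC oA) cX (subsetT _).
have := (compact_near_coveringP (~` A)).1 cC X (filter_from (sb x) id)
   (fun i a => i <> a) FF.
case.
  move=> a nAa.
  have xa : x <> a by move=> xa; apply: nAa; rewrite -xa.
  suff key : exists U V : set X, sym_subbasic d U /\ U x /\ nbhs a V /\
      (forall z, U z -> V z -> False).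
    case: key => U [V [sU [Ux [nV dUV]]]].
    exists (V, U) => //=; first split => //.
      exists U => //; exists 1%N, (fun _ => U); split => //; split => //.
      by rewrite predeqE => y; split => [Uy _|]; [ | apply; exact: ord0].
    move=> [z i] /= [Vz Ui] iz; subst; exact: dUV Ui Vz.
  have [pos|] := boolP (0 < d x a).
    have [e [e0 he]] := ereal_gap _ _ (lexx 0) pos; rewrite add0e in he.
    exists [set z | d x z < e%:E], [set z | d z a < e%:E]; split.
      by exists x, e%:E; split; [rewrite lee_fin ltW|left].
    split; first by rewrite /= dxx lte_fin.
    split.
      apply: (sub_nbhs _ lc); first by exists a, e%:E; split; [rewrite lee_fin ltW|right].
      by rewrite /= dxx lte_fin.
    move=> z /= h1 h2.
    by have := le_lt_trans (dtri x z a) (lt_trans (lteD h1 h2) he); rewrite ltxx.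
  rewrite -leNgt => h1.
  have dxa : d x a = 0 by apply/eqP; rewrite eq_le h1 d0.
  have [pos|] := boolP (0 < d a x).
    have [e [e0 he]] := ereal_gap _ _ (lexx 0) pos; rewrite add0e in he.
    exists [set z | d z x < e%:E], [set z | d a z < e%:E]; split.
      by exists x, e%:E; split; [rewrite lee_fin ltW|right].
    split; first by rewrite /= dxx lte_fin.
    split.
      apply: (sub_nbhs _ lc); first by exists a, e%:E; split; [rewrite lee_fin ltW|left].
      by rewrite /= dxx lte_fin.
    move=> z /= h1' h2.
    by have := le_lt_trans (dtri a z x) (lt_trans (lteD h2 h1') he); rewrite ltxx.
  rewrite -leNgt => h2; exfalso; apply: xa; apply: sep => //.
  by apply/eqP; rewrite eq_le h2 d0.
move=> G [n [B [sB [Bx ->]]]] sub.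
exists n, B; split => //; split => // y By.
apply: contrapT => nAy; exact: (sub y By y nAy).
Qed.


Lemma cont_of_lu : is_metric d -> upper_continuous d -> lower_continuous d ->
  (forall x y, d x y < +oo) ->
  continuous ((fun p : X * X => fine (d p.1 p.2)) : X * X -> R^o).
Proof.
move=> [d0 _] uc lc fin [a b]; apply/cvgrPdist_lt => eps eps0 /=.
have finE : forall x y, d x y = (fine (d x y))%:E.
  by move=> x y; rewrite fineK // ge0_fin_numE.
set r := fine (d a b).
have r0 : (0 <= r)%R by rewrite -lee_fin -finE.
have n1 : \forall q \near (a, b), (fine (d q.1 q.2) < r + eps)%R.
  have h0 : 0 <= (r + eps)%:E by rewrite lee_fin; lra.
  have W1 := lc (r + eps)%:E h0; rewrite openE in W1.
  suff : nbhs (a, b) [set p : X * X | d p.1 p.2 < (r + eps)%:E].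
    by apply: filterS => q /=; rewrite [X in X < _]finE lte_fin.
  by apply: W1; rewrite /= [X in X < _]finE lte_fin ltrDl.
have n2 : \forall q \near (a, b), (r - eps < fine (d q.1 q.2))%R.
  have [ge|lt] := leP 0%R (r - eps)%R.
    have W2 := uc (r - eps)%:E ge; rewrite openE in W2.
    suff : nbhs (a, b) [set p : X * X | (r - eps)%:E < d p.1 p.2].
      by apply: filterS => q /=; rewrite [X in _ < X]finE lte_fin.
    by apply: W2; rewrite /= [X in _ < X]finE lte_fin -/r; lra.
  have : nbhs (a, b) (@setT (X * X)) by exact: filterT.
  apply: filterS => q _; apply: (lt_le_trans lt).
  by rewrite -lee_fin -finE.
apply: filterS2 n1 n2 => q h1 h2.
rewrite ltr_distl; apply/andP; split; lra.
Qed.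

Lemma lower_of_cont : is_metric d -> (forall x y, d x y < +oo) ->
  continuous ((fun p : X * X => fine (d p.1 p.2)) : X * X -> R^o) ->
  lower_continuous d.
Proof.
move=> [d0 _] fin cf u; case: u => [s| |] // u0.
- have finE : forall x y, d x y = (fine (d x y))%:E.
    by move=> x y; rewrite fineK // ge0_fin_numE.
  have -> : [set p : X * X | d p.1 p.2 < s%:E] =
      (fun p : X * X => fine (d p.1 p.2) : R^o) @^-1` [set x : R | (x < s)%R].
    by apply/seteqP; split => p /=; rewrite [X in X < _]finE lte_fin.
  apply: open_comp; [move=> p _; exact: cf | exact: open_lt].
- have -> : [set p : X * X | d p.1 p.2 < +oo] = setT.
    by apply/seteqP; split => p //= _; exact: fin.
  exact: openT.
Qed.

End Helpers.

Theorem proposition2p10 (R : realType) (X : topologicalType)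
  (d : X -> X -> \bar R) :
  compact [set: X] -> hausdorff_space X ->
  is_metric d -> separated_metric d ->
  (sym_topology_coincides d <-> lower_continuous d) /\
  (upper_continuous d -> (forall x y, d x y < +oo) ->
     (lower_continuous d <->
      continuous ((fun p : X * X => fine (d p.1 p.2)) : X * X -> R^o))).
Proof.
move=> cX _ md sd; split.
  split; first by move=> co; exact: coincide_lower.
  move=> lc A; split; first exact: symopen_open.
  exact: open_symopen.
move=> uc fin; split; first by move=> lc; exact: cont_of_lu.
exact: lower_of_cont.
Qed.
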